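(* Let $D$ be a nonempty set and $\epsilon\subseteq D\times D$ a binary relation (write $\epsilon ab$ for $(a,b)\in\epsilon$) such that for all $a,b,c\in D$: $\epsilon ab\Rightarrow\epsilon aa$; $\epsilon ab\wedge\epsilon bc\Rightarrow\epsilon ac$; $\epsilon ab\wedge\epsilon bb\Rightarrow\epsilon ba$. Then $(D,\epsilon)$ satisfies, for all $a,b\in D$, $$\epsilon ab\iff\big(\exists x\in D\,(\epsilon xa\wedge\epsilon xb)\big)\wedge\big(\forall x,y\in D\,(\epsilon xa\wedge\epsilon ya\Rightarrow\epsilon xy)\big)$$ if and only if $D$ contains no singular name.
   Context: A model for $\mathbf{L_1}$ is a pair $(D,\epsilon)$ as in the hypothesis; it is a model for Leśniewski's ontology $\mathbf{L}$ if it satisfies the displayed equivalence (the axiom of $\mathbf{L}$) for all $a,b\in D$. An element $a\in D$ is an atom if $\epsilon aa$. An element $b\in D$ is a singular name if $b$ is not an atom (not $\epsilon bb$), there exists $a\in D$ with $\epsilon ab$, and for all $x,y\in D$, $\epsilon xb\wedge\epsilon yb$ implies $\epsilon xy$. *)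

(* Defs.v *)
Definition L1_model (D : Type) (eps : D -> D -> Prop) : Prop :=
  (forall a b : D, eps a b -> eps a a) /\
  (forall a b c : D, eps a b -> eps b c -> eps a c) /\
  (forall a b : D, eps a b -> eps b b -> eps b a).

Definition L_model (D : Type) (eps : D -> D -> Prop) : Prop :=
  forall a b : D,
    eps a b <->
    ((exists x : D, eps x a /\ eps x b) /\
     (forall x y : D, eps x a -> eps y a -> eps x y)).

Definition atom (D : Type) (eps : D -> D -> Prop) (a : D) : Prop := eps a a.

Definition singular_name (D : Type) (eps : D -> D -> Prop) (b : D) : Prop :=
  ~ eps b b /\
  (exists a : D, eps a b) /\
  (forall x y : D, eps x b -> eps y b -> eps x y).

(* Main.v *)
Require Import Defs.
From Stdlib Require Import Classical.

Theorem theorem5p2 (D : Type) (eps : D -> D -> Prop)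
  (HD : inhabited D) (H1 : L1_model D eps) :
  L_model D eps <-> ~ (exists b : D, singular_name D eps b).
Proof.
  destruct H1 as [R [T S]]. split.
  - intros L [b [Hn [[a Ha] U]]]. apply Hn.
    apply (proj2 (L b b)). split; [exists a; auto | exact U].
  - intros NS a b. split.
    + intros Hab. split.
      * exists a. split; [eapply R; eauto | exact Hab].
      * intros x y Hx Hy. apply T with a; auto.
        apply S; auto. eapply R; eauto.
    + intros [[x [Hxa Hxb]] U].
      destruct (classic (eps a a)) as [Haa|Haa].
      * apply T with x; auto.
      * exfalso. apply NS. exists a. split; [exact Haa|split; [exists x; auto|exact U]].
Qed.
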